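(* Let $\alpha$ be a non-integer real number and $m\ge1$ an integer with $m\ge1+\alpha$, and let $\phi$ be $m$ times continuously differentiable on $(0,1]$. Suppose there exist finite constants $W>0$, $c_m$, $c'_m$ such that for all $p\in(0,1]$ $$|\phi^{(m)}(p)|\le\alpha_{m-1}Wp^{\alpha-m}+c_m\quad\text{and}\quad|\phi^{(m)}(p)|\ge\alpha_{m-1}Wp^{\alpha-m}+c'_m.$$ Then there exist finite constants $c_{m-1}$, $c'_{m-1}$ such that for all $p\in(0,1]$ $$|\phi^{(m-1)}(p)|\le\alpha_{m-2}Wp^{\alpha-m+1}+c_{m-1}\quad\text{and}\quad|\phi^{(m-1)}(p)|\ge\alpha_{m-2}Wp^{\alpha-m+1}+c'_{m-1}.$$
   Context: $\alpha_0=1$ and $\alpha_i=\prod_{j=1}^i(j-\alpha)$ for $i\ge1$. Here $\phi^{(0)}=\phi$. Differentiability at $1$ is one-sided. *)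

(* Defs.v *)
From Stdlib Require Import Reals Lra.
Open Scope R_scope.

Definition I01 (x : R) : Prop := 0 < x <= 1.

Fixpoint alpha_seq (a : R) (i : nat) : R :=
  match i with
  | O => 1
  | S i' => alpha_seq a i' * (INR (S i') - a)
  end.

(* alpha_{k-1}, with the Gamma-function convention
   alpha_i = Gamma(i+1-a)/Gamma(1-a), so that alpha_{-1} = 1/(0 - a) = -1/a
   (the unique extension with alpha_i = (i - a) alpha_{i-1}); only used
   when m = 1, where alpha_{m-2} = alpha_{-1}. *)
Definition alpha_pred (a : R) (k : nat) : R :=
  match k with
  | O => - / a
  | S k' => alpha_seq a k'
  end.

Definition deriv_within01 (f : R -> R) (x l : R) : Prop :=
  forall eps, 0 < eps -> exists delta, 0 < delta /\
    forall y, I01 y -> Rabs (y - x) < delta ->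
      Rabs (f y - f x - l * (y - x)) <= eps * Rabs (y - x).

Definition cont_within01 (f : R -> R) (x : R) : Prop :=
  forall eps, 0 < eps -> exists delta, 0 < delta /\
    forall y, I01 y -> Rabs (y - x) < delta -> Rabs (f y - f x) < eps.

Definition Cm_derivs01 (m : nat) (phi : R -> R) (D : nat -> R -> R) : Prop :=
  (forall x, I01 x -> D O x = phi x) /\
  (forall k x, (k < m)%nat -> I01 x -> deriv_within01 (D k) x (D (S k) x)) /\
  (forall x, I01 x -> cont_within01 (D m) x).

(* Main.v *)
Require Import Defs.
From Stdlib Require Import Reals Lra Lia.
Open Scope R_scope.

Lemma exp_le' x y : x <= y -> exp x <= exp y.
Proof. intros [H|H]. left; apply exp_increasing; auto. subst; lra. Qed.

Lemma ln_le' x y : 0 < x -> x <= y -> ln x <= ln y.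
Proof. intros Hx [H|H]. left; apply ln_increasing; auto. subst; lra. Qed.

Lemma rp_anti E p q : E < 0 -> 0 < p -> p <= q -> Rpower q E <= Rpower p E.
Proof.
  intros HE Hp Hq. unfold Rpower. apply exp_le'.
  assert (ln p <= ln q) by (apply ln_le'; lra). nra.
Qed.

Lemma rp_pos p E : 0 < Rpower p E.
Proof. unfold Rpower; apply exp_pos. Qed.

Lemma rp_exp t E : Rpower (exp (- t)) E = exp (- E * t).
Proof. unfold Rpower. rewrite ln_exp. f_equal; ring. Qed.

Lemma exp_big y : 0 <= y -> 1 + y <= exp y.
Proof. intros [H|H]. left; apply exp_ineq1; lra. subst; rewrite exp_0; lra. Qed.

(* find p small with K p^E + c > 0 *)
Lemma small_p K E c : 0 < K -> E < 0 -> exists t, 0 < t /\ K * exp (- E * t) + c > 0.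
Proof.
  intros HK HE. exists ((Rabs c + 1) / (K * - E)).
  assert (Hp : 0 < K * - E) by nra.
  split. apply Rdiv_lt_0_compat; [pose proof (Rabs_pos c)|]; lra.
  pose proof (exp_big (- E * ((Rabs c + 1) / (K * - E)))).
  assert (- E * ((Rabs c + 1) / (K * - E)) = (Rabs c + 1) / K) by (field; lra).
  rewrite H0 in H. assert (0 <= (Rabs c + 1)/K).
  { apply Rlt_le, Rdiv_lt_0_compat; [pose proof (Rabs_pos c)|]; lra. }
  specialize (H H1). rewrite H0.
  assert (K * ((Rabs c + 1) / K) = Rabs c + 1) by (field; lra).
  pose proof (Rle_abs (-c)). rewrite Rabs_Ropp in H3. nra.
Qed.

Lemma deriv_conv f x l : 0 < x < 1 -> deriv_within01 f x l -> derivable_pt_lim f x l.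
Proof.
  intros Hx Hd eps Heps.
  destruct (Hd (eps/2) ltac:(lra)) as [d [Hd0 Hd1]].
  assert (Hm : 0 < Rmin d (Rmin x (1 - x))).
  { apply Rmin_pos; [lra| apply Rmin_pos; lra]. }
  exists (mkposreal _ Hm). intros h Hh Hhd. simpl in Hhd.
  pose proof (Rmin_l d (Rmin x (1-x))). pose proof (Rmin_r d (Rmin x (1-x))).
  pose proof (Rmin_l x (1-x)). pose proof (Rmin_r x (1-x)).
  assert (Habs : 0 < Rabs h) by (apply Rabs_pos_lt; auto).
  assert (HI : I01 (x + h)).
  { unfold I01. destruct (Rabs_def2 h (Rmin d (Rmin x (1 - x)))) ; lra. }
  specialize (Hd1 (x+h) HI).
  replace (x + h - x) with h in Hd1 by ring.
  specialize (Hd1 ltac:(lra)).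
  replace ((f (x + h) - f x) / h - l) with ((f (x + h) - f x - l * h) / h) by (field; auto).
  unfold Rdiv. rewrite Rabs_mult, Rabs_inv.
  apply (Rmult_le_compat_r (/ Rabs h)) in Hd1; [|left; apply Rinv_0_lt_compat; auto].
  replace (eps / 2 * Rabs h * / Rabs h) with (eps/2) in Hd1 by (field; lra). lra.
Qed.

Lemma cont_conv f x : 0 < x < 1 -> cont_within01 f x -> continuity_pt f x.
Proof.
  intros Hx Hc eps Heps.
  destruct (Hc eps Heps) as [d [Hd0 Hd1]].
  exists (Rmin d (Rmin x (1 - x))). split.
  { apply Rmin_pos; [lra| apply Rmin_pos; lra]. }
  intros y [_ Hy]. simpl in *. unfold R_dist in *.
  pose proof (Rmin_l d (Rmin x (1-x))). pose proof (Rmin_r d (Rmin x (1-x))).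
  pose proof (Rmin_l x (1-x)). pose proof (Rmin_r x (1-x)).
  destruct (Rabs_def2 _ _ Hy).
  apply Hd1; unfold I01; lra.
Qed.

Lemma mvt_bound g g' u v M : 0 < u -> u <= v -> v < 1 ->
  (forall x, u <= x <= v -> derivable_pt_lim g x (g' x)) ->
  (forall x, u <= x <= v -> Rabs (g' x) <= M) ->
  Rabs (g v - g u) <= M * (v - u).
Proof.
  intros Hu [Huv|Huv] Hv Hd HM.
  - destruct (MVT_cor2 g g' u v Huv Hd) as [c [Hc1 Hc2]].
    rewrite Hc1, Rabs_mult, (Rabs_right (v-u)) by lra.
    apply Rmult_le_compat_r; [lra|]. apply HM; lra.
  - subst. replace (g v - g v) with 0 by ring. rewrite Rabs_R0.
    replace (v - v) with 0 by ring. lra.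
Qed.

Lemma alpha_nz a k : (forall n : Z, a <> IZR n) -> alpha_seq a k <> 0.
Proof.
  intros Ha. induction k; cbn [alpha_seq]. lra.
  apply Rmult_integral_contrapositive_currified; auto.
  intro H. apply (Ha (Z.of_nat (S k))). rewrite <- INR_IZR_INZ. lra.
Qed.

Lemma abs_tri u v : Rabs (u - v) <= Rabs u + Rabs v /\ Rabs (u - v) >= Rabs v - Rabs u.
Proof. unfold Rabs; repeat destruct Rcase_abs; split; lra. Qed.

Theorem lemma15 (a : R) (m : nat) (phi : R -> R) (D : nat -> R -> R)
  (W cm cm' : R) :
  (forall n : Z, a <> IZR n) ->
  (1 <= m)%nat ->
  1 + a <= INR m ->
  Cm_derivs01 m phi D ->
  0 < W ->
  (forall p, 0 < p <= 1 ->
     Rabs (D m p) <= alpha_seq a (m - 1) * W * Rpower p (a - INR m) + cm /\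
     Rabs (D m p) >= alpha_seq a (m - 1) * W * Rpower p (a - INR m) + cm') ->
  exists c c' : R, forall p, 0 < p <= 1 ->
     Rabs (D (m - 1)%nat p) <= alpha_pred a (m - 1) * W * Rpower p (a - INR m + 1) + c /\
     Rabs (D (m - 1)%nat p) >= alpha_pred a (m - 1) * W * Rpower p (a - INR m + 1) + c'.
Proof.
  intros Ha Hm Ham [_ [Hder Hcont]] HW Hb.
  destruct m as [|k]; [lia|].
  replace (S k - 1)%nat with k in * by lia.
  set (E := a - INR (S k)) in *.
  set (e := E + 1).
  set (f := D k) in *. set (f' := D (S k)) in *.
  assert (HE : E < 0) by (unfold E; lra).
  assert (He : e < 0).
  { unfold e, E. rewrite S_INR in *. destruct (Req_dec (a - INR k) 0) as [Z|Z].
    - exfalso. apply (Ha (Z.of_nat k)). rewrite <- INR_IZR_INZ. lra.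
    - lra. }
  assert (HA : alpha_pred a k * (- e) = alpha_seq a k).
  { unfold e, E. destruct k as [|k'].
    - simpl. assert (a <> 0) by (apply (Ha 0%Z)). field; auto.
    - cbn [alpha_pred alpha_seq]. replace (INR (S (S k'))) with (INR (S k') + 1) by (rewrite (S_INR (S k')); ring).
      ring. }
  set (A := alpha_pred a k) in *.
  set (K := alpha_seq a k * W).
  assert (HK0 : K <> 0).
  { unfold K. apply Rmult_integral_contrapositive_currified; [apply alpha_nz; auto| lra]. }
  destruct (Rtotal_order K 0) as [HK|[HK|HK]]; [| contradiction |].
  -
    exfalso.
    destruct (small_p (- K) E (- cm) ltac:(lra) HE) as [t [Ht Ht2]].
    assert (Hp : 0 < exp (- t) <= 1).
    { split. apply exp_pos. left. rewrite <- exp_0. apply exp_increasing. lra. }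
    destruct (Hb _ Hp) as [H1 _]. rewrite rp_exp in H1.
    pose proof (Rabs_pos (f' (exp (-t)))). fold K in H1. lra.
  - destruct (small_p K E cm' HK HE) as [t [Ht Ht2]].
    set (eps := exp (- t)).
    assert (Heps : 0 < eps < 1).
    { split. apply exp_pos. rewrite <- exp_0. apply exp_increasing. lra. }
    assert (Hpos : forall p, 0 < p <= eps -> 0 < Rabs (f' p)).
    { intros p Hp. destruct (Hb p ltac:(lra)) as [_ H2]. fold K in H2.
      pose proof (rp_anti E p eps HE (proj1 Hp) (proj2 Hp)).
      unfold eps in H. rewrite rp_exp in H. nra. }
    assert (Hsign : exists s, (s = 1 \/ s = -1) /\ forall p, 0 < p <= eps -> s * f' p = Rabs (f' p)).
    { assert (Hc : forall p x, 0 < p -> p <= x <= eps -> continuity_pt f' x).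
      { intros p x Hp Hx. apply cont_conv; [lra|]. apply Hcont. unfold I01; lra. }
      destruct (Rlt_le_dec 0 (f' eps)) as [Hf|Hf].
      - exists 1. split; [auto|]. intros p Hp.
        destruct (Rlt_le_dec 0 (f' p)) as [Hq|Hq].
        + rewrite Rabs_right; lra.
        + exfalso. destruct Hq as [Hq|Hq].
          * destruct (Req_dec p eps) as [->|Hne]; [lra|].
            destruct (Ranalysis5.IVT_interv f' p eps (fun x Hx => Hc p x (proj1 Hp) Hx) ltac:(lra) Hq Hf) as [z [Hz1 Hz2]].
            specialize (Hpos z ltac:(lra)). rewrite Hz2, Rabs_R0 in Hpos. lra.
          * specialize (Hpos p Hp). rewrite Hq, Rabs_R0 in Hpos. lra.
      - assert (Hf2 : f' eps < 0).
        { destruct Hf as [Hf|Hf]; auto. specialize (Hpos eps ltac:(lra)). rewrite Hf, Rabs_R0 in Hpos. lra. }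
        exists (-1). split; [auto|]. intros p Hp.
        destruct (Rlt_le_dec (f' p) 0) as [Hq|Hq].
        + rewrite Rabs_left; lra.
        + exfalso. destruct Hq as [Hq|Hq].
          * destruct (Req_dec p eps) as [->|Hne]; [lra|].
            destruct (Ranalysis5.IVT_interv (fun x => - f' x) p eps
               (fun x Hx => continuity_pt_opp _ _ (Hc p x (proj1 Hp) Hx)) ltac:(lra) ltac:(lra) ltac:(lra)) as [z [Hz1 Hz2]].
            specialize (Hpos z ltac:(lra)). replace (f' z) with 0 in Hpos by lra. rewrite Rabs_R0 in Hpos. lra.
          * specialize (Hpos p Hp). rewrite <- Hq, Rabs_R0 in Hpos. lra. }
    destruct Hsign as [s [Hs Hsp]].
    assert (Hfd : forall x, 0 < x < 1 -> derivable_pt_lim f x (f' x)).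
    { intros x Hx. apply deriv_conv; auto. apply Hder; [lia| unfold I01; lra]. }
    assert (HAp : 0 < A).
    { assert (0 < alpha_seq a k). { unfold K in HK. nra. }
      nra. }
    set (g := fun x => f x + (s * (A * W)) * Rpower x e).
    set (g' := fun x => f' x + (s * (A * W)) * (e * Rpower x (e - 1))).
    assert (Hgd : forall x, 0 < x < 1 -> derivable_pt_lim g x (g' x)).
    { intros x Hx. unfold g, g'.
      apply (derivable_pt_lim_plus f (fun x => (s * (A * W)) * Rpower x e)); [apply Hfd; auto|].
      apply (derivable_pt_lim_scal (fun x => Rpower x e)). apply derivable_pt_lim_power. lra. }
    set (B0 := Rabs cm + Rabs cm').
    assert (Hg'b : forall x, 0 < x <= eps -> Rabs (g' x) <= B0).
    { intros x Hx. destruct (Hb x ltac:(lra)) as [H1 H2]. fold K in H1, H2.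
      specialize (Hsp x Hx).
      assert (Heq : s * g' x = Rabs (f' x) - K * Rpower x E).
      { unfold g'. replace (e - 1) with E by (unfold e; ring).
        rewrite <- Hsp. unfold K. rewrite <- HA. destruct Hs as [-> | ->]; ring. }
      assert (Rabs (g' x) = Rabs (s * g' x)).
      { rewrite Rabs_mult. destruct Hs as [-> | ->]; [rewrite Rabs_R1| rewrite (Rabs_left (-1)) by lra]; ring. }
      rewrite H, Heq. unfold B0. pose proof (Rle_abs cm) as Q1. pose proof (Rle_abs (-cm')) as Q2.
      rewrite Rabs_Ropp in Q2. pose proof (Rabs_pos cm). pose proof (Rabs_pos cm'). unfold Rabs at 1; destruct Rcase_abs; lra. }
    set (B1 := Rabs (g eps) + B0).
    assert (HB0 : 0 <= B0) by (unfold B0; pose proof (Rabs_pos cm); pose proof (Rabs_pos cm'); lra).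
    assert (Hgb : forall p, 0 < p <= eps -> Rabs (g p) <= B1).
    { intros p Hp.
      pose proof (mvt_bound g g' p eps B0 (proj1 Hp) (proj2 Hp) (proj2 Heps)
        (fun x Hx => Hgd x ltac:(lra)) (fun x Hx => Hg'b x ltac:(lra))).
      unfold B1. replace (g p) with (g eps - (g eps - g p)) by ring.
      destruct (abs_tri (g eps) (g eps - g p)) as [H1 _]. nra. }
    set (M := K * Rpower eps E + Rabs cm).
    set (B2 := Rabs (f eps) + M).
    assert (HM0 : 0 <= M) by (unfold M; pose proof (rp_pos eps E); pose proof (Rabs_pos cm); nra).
    assert (Hfb : forall p, eps <= p < 1 -> Rabs (f p) <= B2).
    { intros p Hp.
      assert (Hd : forall x, eps <= x <= p -> Rabs (f' x) <= M).
      { intros x Hx. destruct (Hb x ltac:(lra)) as [H1 _]. fold K in H1.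
        pose proof (rp_anti E eps x HE (proj1 Heps) (proj1 Hx)).
        pose proof (Rle_abs cm). unfold M. nra. }
      pose proof (mvt_bound f f' eps p M (proj1 Heps) (proj1 Hp) (proj2 Hp)
        (fun x Hx => Hfd x ltac:(lra)) Hd) as Hmv. rewrite Rabs_minus_sym in Hmv.
      unfold B2. replace (f p) with (f eps - (f eps - f p)) by ring.
      destruct (abs_tri (f eps) (f eps - f p)) as [H1 _]. nra. }
    set (H := A * W * Rpower eps e).
    exists (B1 + B2 + Rabs (f 1)), (- (B1 + H)).
    intros p Hp.
    assert (Hh0 : 0 < A * W * Rpower p e) by (pose proof (rp_pos p e); apply Rmult_lt_0_compat; nra).
    assert (HB1 : 0 <= B1) by (unfold B1; pose proof (Rabs_pos (g eps)); lra).
    assert (HB2 : 0 <= B2) by (unfold B2; pose proof (Rabs_pos (f eps)); lra).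
    assert (HH : 0 < H) by (unfold H; pose proof (rp_pos eps e); apply Rmult_lt_0_compat; nra).
    pose proof (Rabs_pos (f 1)). pose proof (Rabs_pos (f p)).
    destruct (Rle_lt_dec p eps) as [Hpe|Hpe].
    + specialize (Hgb p ltac:(lra)).
      assert (Hfe : f p = g p - s * (A * W * Rpower p e)) by (unfold g; ring).
      assert (Habs : Rabs (s * (A * W * Rpower p e)) = A * W * Rpower p e).
      { rewrite Rabs_mult, (Rabs_right (A * W * Rpower p e)) by lra.
        destruct Hs as [-> | ->]; [rewrite Rabs_R1| rewrite (Rabs_left (-1)) by lra]; ring. }
      rewrite Hfe. destruct (abs_tri (g p) (s * (A * W * Rpower p e))) as [T1 T2].
      rewrite Habs in T1, T2. split; lra.
    + assert (Hhp : A * W * Rpower p e <= H).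
      { unfold H. pose proof (rp_anti e eps p He (proj1 Heps) ltac:(lra)).
        apply Rmult_le_compat_l; [nra|lra]. }
      destruct (Req_dec p 1) as [->|Hp1].
      * split; lra.
      * specialize (Hfb p ltac:(lra)). split; lra.
Qed.
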